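(* Let $G$ be a finite simple graph, let $r \ge 1$, and let $H_1,\dots,H_r$ be Hamilton cycles in $G$ (viewed as spanning subgraphs on $V(G)$). Let $H = H_1\cup\dots\cup H_r$ be the spanning subgraph with edge set $E(H_1)\cup\dots\cup E(H_r)$, and let $G-H$ be the spanning subgraph of $G$ with edge set $E(G)\setminus E(H)$. Then $\widetilde{\alpha}(G-H) + 1 \le (r+1)(\widetilde{\alpha}(G)+1)$.
   Context: For disjoint vertex sets $S,T$, $E(S,T)$ is the set of edges with one end in $S$ and one in $T$. An $(s,t)$-bipartite-hole in a graph $F$ consists of two disjoint sets of vertices $S,T$ with $|S|=s$, $|T|=t$ and $E(S,T)=\emptyset$. The bipartite-hole-number $\widetilde{\alpha}(F)$ is the least integer $r'$ which can be written as $r'=s+t-1$ for some positive integers $s,t$ such that $F$ contains no $(s,t)$-bipartite-hole. *)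

(* Defs.v *)
From mathcomp Require Import all_boot.
Set Implicit Arguments. Unset Strict Implicit. Unset Printing Implicit Defensive.

Definition simple_graph (V : finType) (g : rel V) :=
  symmetric g /\ irreflexive g.

Definition has_bhole (V : finType) (g : rel V) (s t : nat) : bool :=
  [exists S : {set V}, exists T : {set V},
     [&& [disjoint S & T], #|S| == s, #|T| == t &
         [forall x in S, forall y in T, ~~ g x y && ~~ g y x]]].

(* k = s + t - 1 for some positive s, t with no (s,t)-bipartite hole
   (s, t bounded by k+1, which is automatic since s + t - 1 = k). *)
Definition bhn_cand (V : finType) (g : rel V) (k : nat) : bool :=
  [exists s : 'I_(k.+2), exists t : 'I_(k.+2),
     [&& 0 < (s : nat), 0 < (t : nat), k == s + t - 1 & ~~ has_bhole g s t]].

Lemma bhn_cand_ex (V : finType) (g : rel V) : exists k, bhn_cand g k.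
Proof.
have hs : #|V|.+1 < #|V|.+3 by rewrite ltnS leqnSn.
have ht : 1 < #|V|.+3 by [].
exists #|V|.+1; apply/existsP; exists (Ordinal hs).
apply/existsP; exists (Ordinal ht).
have -> : has_bhole g #|V|.+1 1 = false.
  rewrite /has_bhole; apply/negbTE/negP; case/existsP => S; case/existsP => T; case/and4P => _ /eqP HS _ _.
  by move: (max_card S); rewrite HS ltnn.
by rewrite /= addnK eqxx.
Qed.

Definition bhn (V : finType) (g : rel V) : nat := ex_minn (bhn_cand_ex g).

Definition hamilton_cycle (V : finType) (g : rel V) (c : seq V) : bool :=
  [&& uniq c, size c == #|V|, 2 < size c & cycle g c].

Definition cycle_edge (V : finType) (c : seq V) : rel V :=
  fun x y => [&& x \in c, y \in c & (next c x == y) || (next c y == x)].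

Definition graph_minus_cycles (V : finType) (g : rel V) (r : nat)
    (H : 'I_r -> seq V) : rel V :=
  fun x y => g x y && ~~ [exists i, cycle_edge (H i) x y].

(* Main.v *)
Require Import Defs.
From mathcomp Require Import all_boot.
From mathcomp Require Import zify.

Lemma subset_card_ex (V : finType) (A : {set V}) k :
  k <= #|A| -> exists B : {set V}, B \subset A /\ #|B| = k.
Proof.
move=> hk; exists [set x in take k (enum A)]; split.
  by apply/subsetP => x; rewrite inE => /mem_take; rewrite mem_enum.
rewrite cardsE; move/card_uniqP: (take_uniq k (enum_uniq (mem A))) => ->.
by rewrite size_take -cardE ltn_neqAle hk andbT; case: eqP.
Qed.

Lemma bhole_sym (V : finType) (g : rel V) s t : has_bhole g s t = has_bhole g t s.
Proof.
suff h : forall s t, has_bhole g s t -> has_bhole g t s.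
  by apply/idP/idP; apply: h.
move=> s1 t1 /existsP [S /existsP [T /and4P [d hS hT /forallP hf]]].
apply/existsP; exists T; apply/existsP; exists S.
rewrite disjoint_sym d hS hT /=; apply/forallP => y; apply/implyP => yT.
apply/forallP => x; apply/implyP => xS.
by move: (hf x) => /implyP /(_ xS) /forallP /(_ y) /implyP /(_ yT); rewrite andbC.
Qed.

Lemma key (V : finType) (g : rel V) (r : nat) (H : 'I_r -> seq V) s t t' :
  (forall i, uniq (H i)) ->
  ~~ has_bhole g s t -> t + 2 * r * s <= t' ->
  ~~ has_bhole (graph_minus_cycles g H) s t'.
Proof.
move=> hu hno ht; apply/negP => /existsP [S /existsP [T' /and4P [d /eqP hS /eqP hT /forallP hf]]].
pose f (p : V * 'I_r * bool) := if p.2 then next (H p.1.2) p.1.1 else prev (H p.1.2) p.1.1.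
pose N := f @: setX (setX S [set: 'I_r]) [set: bool].
have hN : #|N| <= 2 * r * s.
  apply: leq_trans (leq_imset_card _ _) _.
  by rewrite !cardsX !cardsT card_ord card_bool hS; lia.
have hD : t <= #|T' :\: N|.
  have := cardsID N T'; have := subset_leq_card (subsetIr T' N); lia.
have [T [hTs hTc]] := @subset_card_ex _ (T' :\: N) t hD.
move/negP: hno; apply; apply/existsP; exists S; apply/existsP; exists T.
rewrite hS hTc !eqxx /=; apply/andP; split.
  by apply: disjointWr d; apply: subset_trans hTs (subsetDl _ _).
apply/forallP => x; apply/implyP => xS; apply/forallP => y; apply/implyP => yT.
have /setDP [yT' yN] := subsetP hTs _ yT.
move: (hf x) => /implyP /(_ xS) /forallP /(_ y) /implyP /(_ yT') /andP [h1 h2].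
have hce : forall i, cycle_edge (H i) x y -> False.
  move=> i /and3P [xi yi /orP [/eqP e | /eqP e]]; move/negP: yN; apply.
    by apply/imsetP; exists (x, i, true); [rewrite !inE xS | rewrite /f /= e].
  apply/imsetP; exists (x, i, false); first by rewrite !inE xS.
  by rewrite /f /= -e prev_next.
apply/andP; split; apply/negP => hg.
  move: h1; rewrite /graph_minus_cycles hg /= negbK => /existsP [i]; exact: hce.
move: h2; rewrite /graph_minus_cycles hg /= negbK => /existsP [i].
by rewrite /cycle_edge => /and3P [a b c]; apply: (hce i); rewrite /cycle_edge a b orbC.
Qed.

Theorem lemma10 (V : finType) (g : rel V) (r : nat) (H : 'I_r -> seq V) :
  simple_graph g -> 0 < r ->
  (forall i, hamilton_cycle g (H i)) ->
  bhn (graph_minus_cycles g H) + 1 <= (r + 1) * (bhn g + 1).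
Proof.
move=> _ _ hH.
have hu : forall i, uniq (H i) by move=> i; case/and4P: (hH i).
rewrite /bhn; case: ex_minnP => b _ hmin.
case: ex_minnP => a ha _.
move: ha => /existsP [s /existsP [t /and4P [s0 t0 /eqP ea hno]]].
set k := (r + 1) * (s + t) - 1.
suff hk : bhn_cand (graph_minus_cycles g H) k.
  have := hmin _ hk; rewrite ea /k; lia.
have [m [M [hm0 hmM hmn hsum]]] : exists m M, [/\ 0 < m, m <= M,
    ~~ has_bhole g m M & m + M = s + t].
  case: (leqP s t) => hst; first by exists s, t; split.
  by exists t, s; rewrite bhole_sym addnC; split => //; apply: ltnW.
have hM1 : M + r * (s + t) < k.+2 by rewrite /k; nia.
have hm1 : m < k.+2 by rewrite /k; nia.
apply/existsP; exists (Ordinal hm1); apply/existsP; exists (Ordinal hM1) => /=.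
rewrite hm0 /=; apply/and3P; split.
- by rewrite /k; nia.
- by apply/eqP; rewrite /k; nia.
- by apply: key => //; nia.
Qed.
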